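(* Let $\psi,\varphi$ be metric formulas and $n\in\mathbb{N}$ with $n>0$. Then, with respect to strict timed traces: $$\psi\,\mathsf{U}_{[0,n]}\,\varphi\equiv\varphi\vee\Big(\psi\wedge\bigvee_{i=1}^{n}\circ_{[i,i]}\big(\psi\,\mathsf{U}_{[0,n-i]}\,\varphi\big)\Big),\qquad \psi\,\mathsf{R}_{[0,n]}\,\varphi\equiv\varphi\wedge\Big(\psi\vee\bigwedge_{i=1}^{n}\widehat{\circ}_{[i,i]}\big(\psi\,\mathsf{R}_{[0,n-i]}\,\varphi\big)\Big),$$ and the same holds for the dual past operators, i.e. the equivalences obtained by replacing $\mathsf{U},\mathsf{R},\circ,\widehat{\circ}$ by $\mathsf{S},\mathsf{T},\bullet,\widehat{\bullet}$ respectively.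
   Context: Write $[m,n)=\{i\in\mathbb{N}\mid m\le i<n\}$, $[m,n]=\{i\in\mathbb{N}\mid m\le i\le n\}$, $(m,n]=\{i\in\mathbb{N}\mid m<i\le n\}$. Metric formulas over a set of atoms $\mathcal{A}$: $\varphi::=p\mid\bot\mid\varphi_1\wedge\varphi_2\mid\varphi_1\vee\varphi_2\mid\varphi_1\to\varphi_2\mid\bullet_I\varphi\mid\varphi_1\mathsf{S}_I\varphi_2\mid\varphi_1\mathsf{T}_I\varphi_2\mid\circ_I\varphi\mid\varphi_1\mathsf{U}_I\varphi_2\mid\varphi_1\mathsf{R}_I\varphi_2$, $p\in\mathcal{A}$, $I=[m,n)$, $m\in\mathbb{N}$, $n\in\mathbb{N}\cup\{\omega\}$; a subscript $[m,n]$ with $n\in\mathbb{N}$ abbreviates $[m,n+1)$. Derived: $\neg\varphi:=\varphi\to\bot$, $\top:=\neg\bot$, $\widehat{\bullet}_I\varphi:=\bullet_I\varphi\vee\neg\bullet_I\top$, $\widehat{\circ}_I\varphi:=\circ_I\varphi\vee\neg\circ_I\top$. A timed HT-trace of length $\lambda\in\mathbb{N}\cup\{\omega\}$ is $\mathbf{M}=(\langle\mathbf{H},\mathbf{T}\rangle,\tau)$ with $H_i\subseteq T_i\subseteq\mathcal{A}$ for $i\in[0,\lambda)$, $\tau:[0,\lambda)\to\mathbb{N}$, $\tau(0)=0$, $\tau(i)\le\tau(i+1)$; strict if $\tau(i)<\tau(i+1)$ whenever $i+1<\lambda$. Satisfaction at $k\in[0,\lambda)$: $\bot$ never; $p$ iff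 $p\in H_k$; $\wedge,\vee$ usual; $\varphi\to\psi$ iff for both $\mathbf{M}'=\mathbf{M}$ and $\mathbf{M}'=(\langle\mathbf{T},\mathbf{T}\rangle,\tau)$, $\mathbf{M}',k\not\models\varphi$ or $\mathbf{M}',k\models\psi$; $\bullet_I\varphi$ iff $k>0$, $\mathbf{M},k-1\models\varphi$, $\tau(k)-\tau(k-1)\in I$; $\varphi\mathsf{S}_I\psi$ iff for some $j\in[0,k]$ with $\tau(k)-\tau(j)\in I$, $\mathbf{M},j\models\psi$ and $\mathbf{M},i\models\varphi$ for all $i\in(j,k]$; $\varphi\mathsf{T}_I\psi$ iff for all $j\in[0,k]$ with $\tau(k)-\tau(j)\in I$, $\mathbf{M},j\models\psi$ or $\mathbf{M},i\models\varphi$ for some $i\in(j,k]$; $\circ_I\varphi$ iff $k+1<\lambda$, $\mathbf{M},k+1\models\varphi$, $\tau(k+1)-\tau(k)\in I$; $\varphi\mathsf{U}_I\psi$ iff for some $j\in[k,\lambda)$ with $\tau(j)-\tau(k)\in I$, $\mathbf{M},j\models\psi$ and $\mathbf{M},i\models\varphi$ for all $i\in[k,j)$; $\varphi\mathsf{R}_I\psi$ iff for all $j\in[k,\lambda)$ with $\tau(j)-\tau(k)\in I$, $\mathbf{M},j\models\psi$ or $\mathbf{M},i\models\varphi$ for some $i\in[k,j)$. $\alpha\equiv\beta$ (w.r.t. strict traces) means: for every strict timed HT-trace $\mathbf{M}$ of any length $\lambda$ and every $k\in[0,\lambda)$, $\mathbf{M},k\models\alpha$ iff $\mathbf{M},k\models\beta$.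 *)

(* Defs.v *)
From Stdlib Require Import Arith List.
Import ListNotations.
Set Implicit Arguments.

(* Interval [m, n) with n : option nat, None = omega. *)
Inductive formula (A : Type) : Type :=
| Atom : A -> formula A
| Bot : formula A
| And : formula A -> formula A -> formula A
| Or : formula A -> formula A -> formula A
| Impl : formula A -> formula A -> formula A
| Prev : nat -> option nat -> formula A -> formula A
| Since : nat -> option nat -> formula A -> formula A -> formula A
| Trigger : nat -> option nat -> formula A -> formula A -> formula A
| Next : nat -> option nat -> formula A -> formula A
| Until : nat -> option nat -> formula A -> formula A -> formula A
| Release : nat -> option nat -> formula A -> formula A -> formula A.

Arguments Bot {A}.

Definition Neg {A} (f : formula A) : formula A := Impl f Bot.
Definition Top {A} : formula A := Neg Bot.
Definition WNext {A} m n (f : formula A) : formula A := Or (Next m n f) (Neg (Next m n Top)).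
Definition WPrev {A} m n (f : formula A) : formula A := Or (Prev m n f) (Neg (Prev m n Top)).

(* closed interval [m, n] with n a natural number abbreviates [m, n+1) *)
Definition cl (n : nat) : option nat := Some (S n).

Definition bigOr {A} (l : list (formula A)) : formula A := fold_right (@Or A) Bot l.
Definition bigAnd {A} (l : list (formula A)) : formula A := fold_right (@And A) Top l.

(* Timed HT-trace; len = None means length omega. *)
Record trace (A : Type) := mkTrace {
  len : option nat;
  tH : nat -> A -> Prop;
  tT : nat -> A -> Prop;
  tau : nat -> nat
}.

Definition lt_len (l : option nat) (k : nat) : Prop :=
  match l with None => True | Some n => k < n end.

Definition in_int (m : nat) (n : option nat) (d : nat) : Prop :=
  m <= d /\ match n with None => True | Some n => d < n end.

Definition timed_trace {A} (M : trace A) : Prop :=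
  (forall i, lt_len (len M) i -> forall p, tH M i p -> tT M i p) /\
  tau M 0 = 0 /\
  (forall i, lt_len (len M) (S i) -> tau M i <= tau M (S i)).

Definition strict_trace {A} (M : trace A) : Prop :=
  timed_trace M /\ (forall i, lt_len (len M) (S i) -> tau M i < tau M (S i)).

(* sat M w k f: w = false evaluates in <H,T>, w = true in <T,T>. *)
Fixpoint sat {A} (M : trace A) (w : bool) (k : nat) (f : formula A) : Prop :=
  match f with
  | Atom p => if w then tT M k p else tH M k p
  | Bot => False
  | And f1 f2 => sat M w k f1 /\ sat M w k f2
  | Or f1 f2 => sat M w k f1 \/ sat M w k f2
  | Impl f1 f2 => forall w', (w' = w \/ w' = true) -> sat M w' k f1 -> sat M w' k f2
  | Prev m n f1 => 0 < k /\ sat M w (k - 1) f1 /\ in_int m n (tau M k - tau M (k - 1))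
  | Since m n f1 f2 => exists j, j <= k /\ in_int m n (tau M k - tau M j) /\
        sat M w j f2 /\ (forall i, j < i <= k -> sat M w i f1)
  | Trigger m n f1 f2 => forall j, j <= k -> in_int m n (tau M k - tau M j) ->
        sat M w j f2 \/ (exists i, j < i <= k /\ sat M w i f1)
  | Next m n f1 => lt_len (len M) (S k) /\ sat M w (S k) f1 /\ in_int m n (tau M (S k) - tau M k)
  | Until m n f1 f2 => exists j, k <= j /\ lt_len (len M) j /\ in_int m n (tau M j - tau M k) /\
        sat M w j f2 /\ (forall i, k <= i < j -> sat M w i f1)
  | Release m n f1 f2 => forall j, k <= j -> lt_len (len M) j -> in_int m n (tau M j - tau M k) ->
        sat M w j f2 \/ (exists i, k <= i < j /\ sat M w i f1)
  end.

Definition models {A} (M : trace A) (k : nat) (f : formula A) : Prop := sat M false k f.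

Definition equiv_strict {A} (a b : formula A) : Prop :=
  forall M : trace A, strict_trace M -> forall k, lt_len (len M) k ->
    (models M k a <-> models M k b).

Definition idx (n : nat) : list nat := seq 1 n.

(* Main.v *)
Require Import Defs.
From Stdlib Require Import Arith List Lia Classical.

Lemma sat_bigOr {A} (M : trace A) w k l :
  sat M w k (bigOr l) <-> exists f, In f l /\ sat M w k f.
Proof.
  induction l as [|a l IH]; simpl.
  - split; [tauto|intros [f [[] _]]].
  - unfold bigOr in IH. rewrite IH. split.
    + intros [H|[f [H1 H2]]]; eauto.
    + intros [f [[<-|H1] H2]]; eauto.
Qed.

Lemma sat_Top {A} (M : trace A) w k : sat M w k Top.
Proof. simpl. tauto. Qed.

Lemma sat_bigAnd {A} (M : trace A) w k l :
  sat M w k (bigAnd l) <-> forall f, In f l -> sat M w k f.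
Proof.
  induction l as [|a l IH]; simpl.
  - split; [intros _ f []|intros _; simpl; tauto].
  - unfold bigAnd in IH. rewrite IH. split.
    + intros [H1 H2] f [<-|H]; auto.
    + intros H; split; auto.
Qed.

Lemma in_idx {B} (f : nat -> B) n x :
  In x (map f (idx n)) <-> exists i, 1 <= i <= n /\ x = f i.
Proof.
  unfold idx. rewrite in_map_iff. split.
  - intros [i [<- Hi]]. apply in_seq in Hi. exists i; split; [lia|auto].
  - intros [i [Hi ->]]. exists i; split; auto. apply in_seq; lia.
Qed.

Lemma lt_len_mono l a b : a <= b -> lt_len l b -> lt_len l a.
Proof. destruct l; simpl; lia. Qed.

Lemma tau_mono {A} (M : trace A) : timed_trace M ->
  forall a b, a <= b -> lt_len (len M) b -> tau M a <= tau M b.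
Proof.
  intros [_ [_ H]] a b Hab. induction Hab; intros Hl; [lia|].
  pose proof (H m Hl). pose proof (IHHab (lt_len_mono _ _ _ (Nat.le_succ_diag_r m) Hl)). lia.
Qed.

Lemma sat_NegNext {A} (M : trace A) w k i :
  sat M w k (Neg (Next i (cl i) Top)) <-> ~ (lt_len (len M) (S k) /\ tau M (S k) - tau M k = i).
Proof.
  simpl; unfold Defs.in_int, cl in *. split.
  - intros H [H1 H2]. apply (H w (or_introl eq_refl)). repeat split; auto; try lia.
  - intros H w' _ [H1 [_ [H2 H3]]]. apply H; split; auto. lia.
Qed.

Lemma sat_NegPrev {A} (M : trace A) w k i :
  sat M w k (Neg (Prev i (cl i) Top)) <-> ~ (0 < k /\ tau M k - tau M (k - 1) = i).
Proof.
  simpl; unfold Defs.in_int, cl in *. split.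
  - intros H [H1 H2]. apply (H w (or_introl eq_refl)). repeat split; auto; try lia.
  - intros H w' _ [H1 [_ [H2 H3]]]. apply H; split; auto. lia.
Qed.

Lemma until_eq {A} (psi phi : formula A) n (M : trace A) w k :
  strict_trace M -> lt_len (len M) k ->
  (sat M w k (Until 0 (cl n) psi phi) <->
   sat M w k (Or phi (And psi (bigOr (map (fun i => Next i (cl i) (Until 0 (cl (n - i)) psi phi)) (idx n)))))).
Proof.
  intros [HT HS] Hk. pose proof (tau_mono M HT) as Hm.
  change (sat M w k (Or ?a (And ?b ?c))) with (sat M w k a \/ (sat M w k b /\ sat M w k c)).
  rewrite sat_bigOr. simpl; unfold Defs.in_int, cl in *. split.
  - intros [j [Hkj [Hj [[_ Hd] [Hp Hq]]]]].
    destruct (Nat.eq_dec j k) as [->|Hne]; [left; auto|right].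
    assert (Hl1 : lt_len (len M) (S k)) by (apply (lt_len_mono _ _ j); auto; lia).
    pose proof (HS k Hl1). pose proof (Hm (S k) j ltac:(lia) Hj).
    split; [apply Hq; lia|].
    set (i := tau M (S k) - tau M k).
    exists (Next i (Some (S i)) (Until 0 (Some (S (n - i))) psi phi)). split.
    + apply in_idx. exists i. split; [|reflexivity]. unfold i; lia.
    + simpl. split; auto. split. 2:{ unfold i, Defs.in_int; simpl; lia. }
      exists j. unfold Defs.in_int; simpl. repeat split; auto; try lia. intros; apply Hq; lia.
  - intros [H|[Hp [f [Hf Hs]]]].
    + exists k. repeat split; auto; lia.
    + apply in_idx in Hf. destruct Hf as [i [Hi ->]].
      simpl in Hs. unfold Defs.in_int in Hs.
      destruct Hs as [Hl1 [[j [Hkj [Hj [[_ Hd] [Hp2 Hq]]]]] [Hd1 Hd2]]].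
      pose proof (Hm (S k) j Hkj Hj).
      exists j. repeat split; auto; try lia.
      intros i0 Hi0. destruct (Nat.eq_dec i0 k) as [->|]; auto. apply Hq; lia.
Qed.

Lemma release_eq {A} (psi phi : formula A) n (M : trace A) w k :
  strict_trace M -> lt_len (len M) k ->
  (sat M w k (Release 0 (cl n) psi phi) <->
   sat M w k (And phi (Or psi (bigAnd (map (fun i => WNext i (cl i) (Release 0 (cl (n - i)) psi phi)) (idx n)))))).
Proof.
  intros [HT HS] Hk. pose proof (tau_mono M HT) as Hm.
  change (sat M w k (And ?a (Or ?b ?c))) with (sat M w k a /\ (sat M w k b \/ sat M w k c)).
  rewrite sat_bigAnd. split.
  - intros H. simpl in H. unfold Defs.in_int, cl in H. split.
    { destruct (H k) as [H1|[i [Hi _]]]; auto; try lia. }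
    destruct (classic (sat M w k psi)) as [Hp|Hnp]; [left; auto|right].
    intros f Hf. apply in_idx in Hf. destruct Hf as [i [Hi ->]].
    unfold WNext. change (sat M w k (Or ?a ?b)) with (sat M w k a \/ sat M w k b).
    rewrite sat_NegNext.
    destruct (classic (lt_len (len M) (S k) /\ tau M (S k) - tau M k = i)) as [[Hl1 Hd]|Hn]; [left|right; auto].
    simpl. unfold Defs.in_int, cl. split; auto. split; [|simpl; lia].
    intros j Hkj Hj Hdj. simpl in Hdj. pose proof (Hm (S k) j Hkj Hj).
    destruct (H j) as [H1|[i0 [Hi0 H2]]]; auto; try lia.
    right. exists i0. split; auto. destruct (Nat.eq_dec i0 k) as [->|]; [contradiction|lia].
  - intros [Hp [Hq|Hq]]; simpl; unfold Defs.in_int, cl; intros j Hkj Hj Hdj.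
    + destruct (Nat.eq_dec j k) as [->|]; [auto|right; exists k; split; auto; lia].
    + destruct (Nat.eq_dec j k) as [->|Hne]; [auto|].
      assert (Hl1 : lt_len (len M) (S k)) by (apply (lt_len_mono _ _ j); auto; lia).
      pose proof (HS k Hl1). pose proof (Hm (S k) j ltac:(lia) Hj).
      set (i := tau M (S k) - tau M k).
      specialize (Hq (WNext i (cl i) (Release 0 (cl (n - i)) psi phi))).
      destruct Hq as [Hq|Hq].
      * apply in_idx. exists i. split; [|reflexivity]. unfold i; simpl in Hdj; lia.
      * simpl in Hq. destruct Hq as [_ [Hq _]].
        destruct (Hq j ltac:(lia) Hj) as [H1|[i0 [Hi0 H2]]]; auto.
        { unfold Defs.in_int; simpl in Hdj |- *; unfold i in *; lia. }
        right. exists i0. split; auto. lia.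
      * exfalso. apply sat_NegNext in Hq. apply Hq. split; auto.
Qed.

Lemma since_eq {A} (psi phi : formula A) n (M : trace A) w k :
  strict_trace M -> lt_len (len M) k ->
  (sat M w k (Since 0 (cl n) psi phi) <->
   sat M w k (Or phi (And psi (bigOr (map (fun i => Prev i (cl i) (Since 0 (cl (n - i)) psi phi)) (idx n)))))).
Proof.
  intros [HT HS] Hk. pose proof (tau_mono M HT) as Hm.
  change (sat M w k (Or ?a (And ?b ?c))) with (sat M w k a \/ (sat M w k b /\ sat M w k c)).
  rewrite sat_bigOr. simpl; unfold Defs.in_int, cl in *. split.
  - intros [j [Hkj [[_ Hd] [Hp Hq]]]].
    destruct (Nat.eq_dec j k) as [->|Hne]; [left; auto|right].
    assert (Hl1 : lt_len (len M) (S (k - 1))) by (replace (S (k - 1)) with k by lia; auto).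
    pose proof (HS (k - 1) Hl1). replace (S (k - 1)) with k in * by lia.
    pose proof (Hm j (k - 1) ltac:(lia) (lt_len_mono _ (k - 1) k ltac:(lia) Hk)).
    split; [apply Hq; lia|].
    set (i := tau M k - tau M (k - 1)).
    exists (Prev i (Some (S i)) (Since 0 (Some (S (n - i))) psi phi)). split.
    + apply in_idx. exists i. split; [|reflexivity]. unfold i; lia.
    + simpl. split; [lia|]. split. 2:{ unfold i, Defs.in_int; simpl; lia. }
      exists j. unfold Defs.in_int; simpl. repeat split; auto; try lia. intros; apply Hq; lia.
  - intros [H|[Hp [f [Hf Hs]]]].
    + exists k. repeat split; auto; lia.
    + apply in_idx in Hf. destruct Hf as [i [Hi ->]].
      simpl in Hs. unfold Defs.in_int in Hs.
      destruct Hs as [Hl1 [[j [Hkj [[_ Hd] [Hp2 Hq]]]] [Hd1 Hd2]]].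
      pose proof (Hm j (k - 1) Hkj (lt_len_mono _ (k - 1) k ltac:(lia) Hk)).
      exists j. repeat split; auto; try lia.
      intros i0 Hi0. destruct (Nat.eq_dec i0 k) as [->|]; auto. apply Hq; lia.
Qed.

Lemma trigger_eq {A} (psi phi : formula A) n (M : trace A) w k :
  strict_trace M -> lt_len (len M) k ->
  (sat M w k (Trigger 0 (cl n) psi phi) <->
   sat M w k (And phi (Or psi (bigAnd (map (fun i => WPrev i (cl i) (Trigger 0 (cl (n - i)) psi phi)) (idx n)))))).
Proof.
  intros [HT HS] Hk. pose proof (tau_mono M HT) as Hm.
  change (sat M w k (And ?a (Or ?b ?c))) with (sat M w k a /\ (sat M w k b \/ sat M w k c)).
  rewrite sat_bigAnd. split.
  - intros H. simpl in H. unfold Defs.in_int, cl in H. split.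
    { destruct (H k) as [H1|[i [Hi _]]]; auto; try lia. }
    destruct (classic (sat M w k psi)) as [Hp|Hnp]; [left; auto|right].
    intros f Hf. apply in_idx in Hf. destruct Hf as [i [Hi ->]].
    unfold WPrev. change (sat M w k (Or ?a ?b)) with (sat M w k a \/ sat M w k b).
    rewrite sat_NegPrev.
    destruct (classic (0 < k /\ tau M k - tau M (k - 1) = i)) as [[Hl1 Hd]|Hn]; [left|right; auto].
    simpl. unfold Defs.in_int, cl. split; auto. split; [|simpl; lia].
    intros j Hkj Hdj. simpl in Hdj.
    pose proof (Hm j (k - 1) Hkj (lt_len_mono _ (k - 1) k ltac:(lia) Hk)).
    pose proof (Hm (k - 1) k ltac:(lia) Hk).
    destruct (H j) as [Hj1|[i0 [Hi0 Hj2]]]; auto; try lia.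
    right. exists i0. split; auto. destruct (Nat.eq_dec i0 k) as [->|]; [contradiction|lia].
  - intros [Hp [Hq|Hq]]; simpl; unfold Defs.in_int, cl; intros j Hkj Hdj.
    + destruct (Nat.eq_dec j k) as [->|]; [auto|right; exists k; split; auto; lia].
    + destruct (Nat.eq_dec j k) as [->|Hne]; [auto|].
      assert (Hl1 : lt_len (len M) (S (k - 1))) by (replace (S (k - 1)) with k by lia; auto).
      pose proof (HS (k - 1) Hl1). replace (S (k - 1)) with k in * by lia.
      pose proof (Hm j (k - 1) ltac:(lia) (lt_len_mono _ (k - 1) k ltac:(lia) Hk)).
      set (i := tau M k - tau M (k - 1)).
      specialize (Hq (WPrev i (cl i) (Trigger 0 (cl (n - i)) psi phi))).
      destruct Hq as [Hq|Hq].
      * apply in_idx. exists i. split; [|reflexivity]. unfold i; simpl in Hdj; lia.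
      * simpl in Hq. destruct Hq as [_ [Hq _]].
        destruct (Hq j ltac:(lia)) as [H1|[i0 [Hi0 H2]]]; auto.
        { unfold Defs.in_int; simpl in Hdj |- *; unfold i in *; lia. }
        right. exists i0. split; auto. lia.
      * exfalso. apply sat_NegPrev in Hq. apply Hq. split; auto. lia.
Qed.

Theorem lemma3 (A : Type) (psi phi : formula A) (n : nat) (Hn : 0 < n) :
  equiv_strict (Until 0 (cl n) psi phi)
    (Or phi (And psi (bigOr (map (fun i => Next i (cl i) (Until 0 (cl (n - i)) psi phi)) (idx n)))))
  /\ equiv_strict (Release 0 (cl n) psi phi)
    (And phi (Or psi (bigAnd (map (fun i => WNext i (cl i) (Release 0 (cl (n - i)) psi phi)) (idx n)))))
  /\ equiv_strict (Since 0 (cl n) psi phi)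
    (Or phi (And psi (bigOr (map (fun i => Prev i (cl i) (Since 0 (cl (n - i)) psi phi)) (idx n)))))
  /\ equiv_strict (Trigger 0 (cl n) psi phi)
    (And phi (Or psi (bigAnd (map (fun i => WPrev i (cl i) (Trigger 0 (cl (n - i)) psi phi)) (idx n))))).
Proof.
  unfold equiv_strict, models. split; [|split; [|split]]; intros M HM k Hk.
  - exact (until_eq psi phi n M false k HM Hk).
  - exact (release_eq psi phi n M false k HM Hk).
  - exact (since_eq psi phi n M false k HM Hk).
  - exact (trigger_eq psi phi n M false k HM Hk).
Qed.
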